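(* Let $\mathbb{R}_0=\{x\in\mathbb{R}: x\ge 0\}$ and let $\widetilde{U}:\mathbb{R}_0\to\mathbb{R}_0$ be defined by \[ \widetilde{U}(x)=\begin{cases} \dfrac{3x+1}{2} & \text{if } \lfloor x\rfloor \text{ is even},\\[4pt] \dfrac{x}{2} & \text{if } \lfloor x\rfloor \text{ is odd}.\end{cases}\] Then there are no $\widetilde{U}$-cycles: there is no $x\in\mathbb{R}_0$ and no integer $k\ge 1$ with $\widetilde{U}^k(x)=x$.
   Context: $\lfloor x\rfloor$ denotes the largest integer $\le x$. For a function $f:X\to X$, $f^0$ is the identity and $f^i=f\circ f^{i-1}$. An $f$-cycle is the trajectory of a point $z$ with $f^n(z)=z$ for some $n\ge 1$. *)

(* Defs.v *)
From Stdlib Require Import Reals ZArith.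
Open Scope R_scope.

(* floor x = largest integer <= x ; Stdlib's [up x] is the unique integer with
   x < up x <= x + 1, hence floor x = up x - 1. *)
Definition floorR (x : R) : Z := (up x - 1)%Z.

(* The map U~ on R_0 (defined on all of R; only used on x >= 0). *)
Definition Ut (x : R) : R :=
  if Z.even (floorR x) then (3 * x + 1) / 2 else x / 2.

Fixpoint iterR (k : nat) (f : R -> R) (x : R) : R :=
  match k with
  | O => x
  | S k' => f (iterR k' f x)
  end.

(* Main.v *)
Require Import Defs.
From Stdlib Require Import Reals ZArith.
From Stdlib Require Import Lra Lia Psatz.
Open Scope R_scope.

Definition hh (x : R) : R := IZR (up x) - x.

Lemma hh_pos x : 0 < hh x.
Proof. unfold hh. destruct (archimed x). lra. Qed.

Lemma up_le (y : R) (m : Z) : y < IZR m -> (up y <= m)%Z.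
Proof.
  intros H. destruct (archimed y) as [H1 H2].
  assert (IZR (up y) < IZR (m + 1)) by (rewrite plus_IZR; simpl; lra).
  apply lt_IZR in H0. lia.
Qed.

Lemma hh_step x : 0 <= x ->
  0 <= Ut x /\ (2 * x + 1) * hh (Ut x) < (2 * Ut x + 1) * hh x.
Proof.
  intros Hx. pose proof (hh_pos x) as Hp.
  destruct (archimed x) as [A1 A2].
  unfold Ut, floorR.
  destruct (Z.even (up x - 1)) eqn:E.
  - apply Z.even_spec in E. destruct E as [j Hj].
    assert (Hu : up x = (2 * j + 1)%Z) by lia.
    rewrite Hu in A1, A2.
    rewrite plus_IZR, mult_IZR in A1, A2. simpl in A1, A2.
    assert (Hl : (up ((3 * x + 1) / 2) <= 3 * j + 2)%Z).
    { apply up_le. rewrite plus_IZR, mult_IZR. simpl. lra. }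
    apply IZR_le in Hl. rewrite plus_IZR, mult_IZR in Hl. simpl in Hl.
    unfold hh in *. rewrite Hu in Hp |- *. rewrite plus_IZR, mult_IZR in Hp |- *.
    simpl in Hp |- *.
    split; [lra|].
    set (u := IZR (up ((3 * x + 1) / 2))) in *.
    assert (H3 : u - (3 * x + 1) / 2 <= 3 / 2 * (2 * IZR j + 1 - x)) by lra.
    assert (H4 : (2 * x + 1) * (u - (3 * x + 1) / 2) <=
                 (2 * x + 1) * (3 / 2 * (2 * IZR j + 1 - x))).
    { apply Rmult_le_compat_l; lra. }
    nra.
  - assert (E' : Z.odd (up x - 1) = true).
    { rewrite <- Z.negb_even, E. reflexivity. }
    apply Z.odd_spec in E'. destruct E' as [j Hj].
    assert (Hu : up x = (2 * j + 2)%Z) by lia.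
    rewrite Hu in A1, A2.
    rewrite plus_IZR, mult_IZR in A1, A2. simpl in A1, A2.
    assert (Hl : (up (x / 2) <= j + 1)%Z).
    { apply up_le. rewrite plus_IZR. simpl. lra. }
    apply IZR_le in Hl. rewrite plus_IZR in Hl. simpl in Hl.
    unfold hh in *. rewrite Hu in Hp |- *. rewrite plus_IZR, mult_IZR in Hp |- *.
    simpl in Hp |- *.
    split; [lra|].
    set (u := IZR (up (x / 2))) in *.
    assert (H3 : u - x / 2 <= (2 * IZR j + 2 - x) / 2) by lra.
    assert (H4 : (2 * x + 1) * (u - x / 2) <= (2 * x + 1) * ((2 * IZR j + 2 - x) / 2)).
    { apply Rmult_le_compat_l; lra. }
    nra.
Qed.

Definition Q (x : R) : R := (2 * x + 1) / hh x.

Lemma frac_lt a b c d : 0 < b -> 0 < d -> a * d < c * b -> a / b < c / d.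
Proof.
  intros Hb Hd H.
  replace (a / b) with ((a * d) * / (b * d)) by (field; lra).
  replace (c / d) with ((c * b) * / (b * d)) by (field; lra).
  apply Rmult_lt_compat_r; [apply Rinv_0_lt_compat; nra | exact H].
Qed.

Lemma Q_step x : 0 <= x -> 0 <= Ut x /\ Q x < Q (Ut x).
Proof.
  intros Hx. destruct (hh_step x Hx) as [H1 H2]. split; auto.
  unfold Q. apply frac_lt; auto using hh_pos.
Qed.

Lemma iter_nonneg k x : 0 <= x -> 0 <= iterR k Ut x.
Proof.
  induction k; simpl; intros; auto.
  apply (Q_step _ (IHk H)).
Qed.

Lemma iter_Q k x : 0 <= x -> Q x < Q (iterR (S k) Ut x).
Proof.
  intros Hx. induction k.
  - simpl. apply (Q_step x Hx).
  - change (iterR (S (S k)) Ut x) with (Ut (iterR (S k) Ut x)).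
    pose proof (Q_step _ (iter_nonneg (S k) x Hx)) as [_ H]. lra.
Qed.

Theorem theorem2 :
  ~ exists (x : R) (k : nat), 0 <= x /\ (1 <= k)%nat /\ iterR k Ut x = x.
Proof.
  intros [x [k [Hx [Hk Hc]]]].
  destruct k as [|k]; [lia|].
  pose proof (iter_Q k x Hx) as H. rewrite Hc in H. lra.
Qed.
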